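(* Let $k\geq 2$ be an integer, let $G$ be a graph of order $n$, and let $v$ be a vertex of $G$. Suppose $G$ contains no path on $2k+1$ vertices (as a subgraph) both of whose endvertices are different from $v$. Then \[ 2e(G)-d_{v}\leq (2k-1)(n-1), \] unless $G$ is the disjoint union of zero or more copies of $K_{2k}$ and one copy of $K_{2k}+v$.
   Context: All graphs are finite and simple. $e(G)$ is the number of edges of $G$ and $d_v$ is the degree of $v$. $K_{2k}$ is the complete graph on $2k$ vertices, and $K_{2k}+v$ denotes the graph on $2k+1$ vertices obtained by joining the vertex $v$ by a single edge to exactly one vertex of a complete graph $K_{2k}$. *)

(* Defs.v *)
From mathcomp Require Import all_boot.
Set Implicit Arguments. Unset Strict Implicit. Unset Printing Implicit Defensive.

Definition simple_graph (T : finType) (e : rel T) : Prop :=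
  symmetric e /\ irreflexive e.

Definition num_edges (T : finType) (e : rel T) : nat :=
  #|[set A : {set T} | [exists x, exists y, e x y && (A == [set x; y])]]|.

Definition deg (T : finType) (e : rel T) (v : T) : nat := #|[set w | e v w]|.

Definition is_path_on (T : finType) (e : rel T) (m : nat) (s : seq T) : bool :=
  [&& size s == m, uniq s &
      if s is x :: p then path e x p else false].

Definition has_path_avoiding_ends (T : finType) (e : rel T) (m : nat) (v : T) : Prop :=
  exists (x : T) (p : seq T),
    [/\ is_path_on e m (x :: p), x != v & last x p != v].

Definition clique (T : finType) (e : rel T) (B : {set T}) : Prop :=
  forall x y, x \in B -> y \in B -> x != y -> e x y.

(* G is the disjoint union of zero or more copies of K_{2k} and one copy of
   K_{2k}+v (the pendant vertex being v): the vertex set is partitioned into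
   blocks with no edges between distinct blocks; every block not containing v
   induces K_{2k}; the block containing v has 2k+1 vertices, removing v leaves
   a clique, and v has exactly one neighbour (inside its block). *)
Definition exceptional_graph (T : finType) (e : rel T) (k : nat) (v : T) : Prop :=
  exists P : {set {set T}},
    [/\ partition P [set: T],
        (forall B1 B2 x y, B1 \in P -> B2 \in P -> B1 != B2 ->
            x \in B1 -> y \in B2 -> ~~ e x y),
        (forall B, B \in P -> v \notin B -> #|B| = (2 * k)%N /\ clique e B)
      & (forall B, B \in P -> v \in B ->
            [/\ #|B| = (2 * k).+1, clique e (B :\ v) & #|[set w | e v w]| = 1%N])].

(* Main.v *)
Require Import Defs.
From mathcomp Require Import all_boot zify.
Set Implicit Arguments. Unset Strict Implicit. Unset Printing Implicit Defensive.

Lemma arith1 d K : d < K -> d * (d - 1) + d <= (K - 1) * d.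
Proof. move=> H. have : d <= K - 1 by lia. move=> H'. have := leq_mul H' (leqnn d). case: d {H H'} => [|d] /=; [lia|]. rewrite subn1 /= mulnS. lia. Qed.
Lemma arith2 d K : 0 < d -> d < K -> d * (d - 1) + 1 <= (K - 1) * d.
Proof. move=> H0 H; have := @arith1 d K H; lia. Qed.

Section Main.
Variables (k : nat) (T : finType) (e : rel T) (v : T).
Hypothesis hk : 2 <= k.
Hypothesis esym : symmetric e.
Hypothesis eirr : irreflexive e.
Hypothesis nopath : ~ has_path_avoiding_ends e (2 * k).+1 v.

Lemma two_le : 2 <= 2 * k.
Proof. by apply: leq_trans hk _; rewrite leq_pmull. Qed.

Definition sp (s : seq T) := if s is x :: p then path e x p else true.

Lemma sp_behead s : sp s -> sp (behead s).
Proof. by case: s => [|x [|y p]] //= /andP[]. Qed.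

Lemma sp_drop n s : sp s -> sp (drop n s).
Proof.
elim: n s => [|n IH] s H; first by rewrite drop0.
case: s H => [|x p] //= H.
by apply: IH; exact: (sp_behead (s := x :: p)).
Qed.

Lemma sp_take n s : sp s -> sp (take n s).
Proof.
case: s => [|x p] //=; case: n => [|n] //= H.
by rewrite -(cat_take_drop n p) cat_path in H; case/andP: H.
Qed.

Lemma sp_rev s : sp s -> sp (rev s).
Proof.
case/lastP: s => [|p x] //; rewrite rev_rcons.
case: p => [|y p] // H.
have E1 : rev (y :: p) = rev (belast y (rcons p x)) by rewrite belast_rcons.
have E2 : x = last y (rcons p x) by rewrite last_rcons.
rewrite /= E1 {1}E2 rev_path (eq_path (e' := e)) // => a b; rewrite /= esym.
Qed.

Lemma sp_cat s1 s2 : sp s1 -> sp s2 ->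
  (if s1 is [::] then true else if s2 is [::] then true else e (last v s1) (head v s2)) ->
  sp (s1 ++ s2).
Proof.
case: s1 => [|x p] //= H1; case: s2 => [|y q] //=; first by rewrite cats0.
move=> H2 H3; rewrite cat_path H1 /= H2 andbT.
by move: H3; case: p {H1} => //.
Qed.

Lemma GP (q t : seq T) : uniq (q ++ t) -> sp (q ++ t) -> v \notin q ->
  t != [::] -> last v t != v -> (2 * k).+1 <= size q + size t -> size t <= 2 * k -> False.
Proof.
move=> Hu Hs Hv Ht Hl Hsz Hst.
set n := size q + size t - (2 * k).+1.
have Hn : n < size q by rewrite /n; lia.
set s := q ++ t.
have Hd : drop n s = nth v q n :: drop n.+1 s.
  by rewrite (drop_nth v) ?size_cat; [rewrite nth_cat Hn | lia].
apply: nopath; exists (nth v q n), (drop n.+1 s); split.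
- rewrite /is_path_on -Hd size_drop size_cat drop_uniq //=.
  apply/andP; split; first by apply/eqP; rewrite /n; lia.
  by have := sp_drop n Hs; rewrite Hd.
- by apply: contraNneq Hv => <-; rewrite mem_nth.
- have : last v s = last (nth v q n) (drop n.+1 s).
    by rewrite -{1}(cat_take_drop n s) last_cat Hd.
  move=> <-; rewrite /s last_cat.
  by case: t Ht Hl {Hu Hs Hsz Hst s Hd n Hn}.
Qed.

Lemma clique_sp (K : {set T}) s : clique e K -> uniq s -> {subset s <= K} -> sp s.
Proof.
move=> HK; case: s => [|x p] //=.
elim: p x => [|y p IH] x //= /andP[Hx /andP[Hy Hp]] Hs.
apply/andP; split.
  apply: HK.
  - by apply: Hs; rewrite inE eqxx.
  - by apply: Hs; rewrite !inE eqxx orbT.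
  - by apply/eqP => Exy; move: Hx; rewrite Exy mem_head.
apply: IH; first by rewrite Hy Hp.
by move=> a Ha; apply: Hs; rewrite inE Ha orbT.
Qed.

Lemma PK (K : {set T}) w t : clique e K -> #|K| = 2 * k -> v \notin K -> w \in K ->
  uniq t -> (forall y, y \in t -> y \notin K) -> sp (w :: t) -> t != [::] ->
  last v t != v -> size t <= 2 * k -> False.
Proof.
move=> HK HKs HvK HwK Hut HtK Hsp Ht Hl Hst.
set q := rcons (rem w (enum K)) w.
have Hq : {subset q <= K}.
  move=> a; rewrite mem_rcons inE => /orP[/eqP -> //|].
  by move/mem_rem; rewrite mem_enum.
have Huq : uniq q.
  rewrite /q rcons_uniq rem_uniq ?enum_uniq // andbT.
  by rewrite (mem_rem_uniq _ (enum_uniq (pred_of_set K))) inE eqxx.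
apply: (@GP q t).
- rewrite cat_uniq Huq Hut andbT /=; apply/hasPn => y /HtK.
  by apply: contra => /Hq.
- apply: sp_cat; first exact: (clique_sp HK).
    exact: (sp_behead (s := w :: t)).
  rewrite /q; case: (rem w (enum K)) => [|a r]; case: t {Hut HtK Ht Hl Hst} Hsp => //= y t;
    rewrite ?last_rcons; by case/andP.
- by apply: contra HvK => /Hq.
- done.
- done.
- rewrite /q size_rcons size_rem ?mem_enum // -cardE HKs.
  by case: t Ht {Hut HtK Hsp Hl Hst} => //= *; lia.
- done.
Qed.


Lemma CD1 x p z : uniq (x :: p) -> path e x (rcons p x) -> v \notin x :: p ->
  size (x :: p) = 2 * k -> e x v -> z \notin x :: p -> z != v -> e v z -> False.
Proof.
move=> Hu Hp Hv Hs Hxv Hz Hzv Hvz.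
apply: (@GP (rcons p x) [:: v; z]).
- rewrite cat_uniq rcons_uniq /= !mem_rcons.
  move: Hu Hv Hz; rewrite /= !inE !negb_or => /andP[-> ->] /andP[H1 H2] /andP[H3 H4].
  by rewrite (negbTE H1) (negbTE H2) (negbTE H3) (negbTE H4) eq_sym Hzv.
- apply: sp_cat; first exact: (sp_behead (s := x :: rcons p x)).
    by rewrite /= Hvz.
  by case: p {Hu Hp Hv Hs Hz} => [|a p] //=; rewrite last_rcons.
- by rewrite mem_rcons.
- done.
- done.
- by rewrite size_rcons /= -Hs /=; lia.
- by rewrite /=; apply: leq_trans two_le.
Qed.

Lemma CD2 x p z : uniq (x :: p) -> path e x (rcons p x) -> v \notin x :: p ->
  size (x :: p) = 2 * k -> e x v -> z \in p -> e v z -> False.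
Proof.
move=> Hu Hp Hv Hs Hxv Hz Hvz.
set i := index z p.
have Hi : i < size p by rewrite index_mem.
have Hd : drop i p = z :: drop i.+1 p by rewrite (drop_nth v Hi) nth_index.
have Hpp : path e x p by move: Hp; rewrite rcons_path => /andP[].
have Hvp : v \notin p by move: Hv; rewrite inE negb_or => /andP[].
have Hvx : x != v by move: Hv; rewrite inE negb_or eq_sym => /andP[].
apply: (@GP (rev (x :: take i p)) (v :: drop i p)).
- have Hperm : perm_eq (rev (x :: take i p) ++ v :: drop i p) (v :: x :: p).
    rewrite -(cat1s v (drop i p)) perm_catCA /= perm_cons.
    rewrite -[in X in perm_eq _ X](cat_take_drop i p) -cat_cons perm_cat2r.
    by rewrite perm_rev.
  by rewrite (perm_uniq Hperm); apply/andP; split.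
- have Hsp : sp p by exact: (sp_behead (s := x :: p)).
  have Hsd := sp_drop i Hsp; rewrite Hd /= in Hsd.
  apply: sp_cat.
  + apply: sp_rev; exact: (sp_take i.+1 (s := x :: p)).
  + by rewrite Hd /= Hvz.
  + by rewrite rev_cons; case: (rev (take i p)) => [|a r] /=; rewrite ?last_rcons.
- rewrite mem_rev inE negb_or eq_sym Hvx /=.
  by apply: contra Hvp; apply: mem_take.
- done.
- rewrite Hd /=; apply: contra Hvp => /eqP Ez.
  have := mem_last z (drop i.+1 p); rewrite Ez -Hd; exact: mem_drop.
- rewrite size_rev /= size_takel ?size_drop; last exact: ltnW.
  by move: Hs => /= Hs; lia.
- rewrite /= size_drop; move: Hs => /= Hs; lia.
Qed.


Lemma CycD1 c x z : uniq c -> cycle e c -> v \notin c -> size c = 2 * k ->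
  x \in c -> e x v -> z \notin c -> z != v -> e v z -> False.
Proof.
move=> Hu Hc Hv Hs Hx Hxv Hz Hzv Hvz.
case/rot_to: Hx => i p Hr.
apply: (@CD1 x p z) => //.
- by rewrite -Hr rot_uniq.
- by have := Hc; rewrite -(rot_cycle i) Hr.
- by rewrite -Hr mem_rot.
- by rewrite -Hr size_rot.
- by rewrite -Hr mem_rot.
Qed.

Lemma CycD2 c x z : uniq c -> cycle e c -> v \notin c -> size c = 2 * k ->
  x \in c -> z \in c -> x != z -> e x v -> e v z -> False.
Proof.
move=> Hu Hc Hv Hs Hx Hz Hxz Hxv Hvz.
case/rot_to: Hx => i p Hr.
apply: (@CD2 x p z) => //.
- by rewrite -Hr rot_uniq.
- by have := Hc; rewrite -(rot_cycle i) Hr.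
- by rewrite -Hr mem_rot.
- by rewrite -Hr size_rot.
- by move: Hz; rewrite -(mem_rot i) Hr inE eq_sym (negbTE Hxz).
Qed.

Lemma crossing (x0 : T) (p : seq T) (a b : pred T) :
  size p < count a p + count b (belast x0 p) ->
  exists p1 y r, [/\ p = p1 ++ y :: r, a y & b (last x0 p1)].
Proof.
elim: p x0 => [|y p IH] x0 //=.
case Ha: (a y); case Hb: (b x0) => /=.
- by move=> _; exists nil, y, p.
- move=> H; have H' : size p < count a p + count b (belast y p) by lia.
  have [p1 [y' [r [Ep H1 H2]]]] := IH y H'; rewrite Ep.
  by exists (y :: p1), y', r.
- move=> H; have H' : size p < count a p + count b (belast y p) by lia.
  have [p1 [y' [r [Ep H1 H2]]]] := IH y H'; rewrite Ep.
  by exists (y :: p1), y', r.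
- move=> H; have H' : size p < count a p + count b (belast y p) by lia.
  have [p1 [y' [r [Ep H1 H2]]]] := IH y H'; rewrite Ep.
  by exists (y :: p1), y', r.
Qed.

Lemma count_lb (N : {set T}) (q : seq T) (a : pred T) :
  {subset N <= q} -> (forall y, y \in N -> a y) -> #|N| <= count a q.
Proof.
move=> H1 H2; rewrite -size_filter.
apply: leq_trans (card_size _).
apply: subset_leq_card; apply/subsetP => y Hy.
by rewrite mem_filter H2 // H1.
Qed.

Lemma head_rev s : head v (rev s) = last v s.
Proof. by case/lastP: s => [|s x] //; rewrite rev_rcons last_rcons. Qed.

Lemma last_rev s : last v (rev s) = head v s.
Proof. by case: s => [|x s] //; rewrite rev_cons last_rcons. Qed.

Lemma sp_catL s1 s2 : sp s1 -> sp s2 -> s1 != [::] -> s2 != [::] ->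
  e (last v s1) (head v s2) -> sp (s1 ++ s2).
Proof.
move=> H1 H2; case: s1 H1 => [|x s1] // H1 _; case: s2 H2 => [|y s2] // H2 _ H3.
by apply: sp_cat.
Qed.


Section Comp.
Variable W : {set T}.
Hypothesis HvW : v \notin W.
Hypothesis Hdeg : forall u, u \in W -> k <= #|[set w in W | e u w]|.

Lemma noLong s : uniq s -> sp s -> {subset s <= W} -> size s <= 2 * k.
Proof.
move=> Hu Hsp HsW; rewrite leqNgt; apply/negP => Hlt.
have Hs' : size (take (2 * k).+1 s) = (2 * k).+1 by rewrite size_takel.
have Hsub : {subset take (2 * k).+1 s <= W} by move=> a /mem_take; exact: HsW.
have Hsp' := sp_take (2 * k).+1 Hsp.
have Hu' : uniq (take (2 * k).+1 s) by rewrite take_uniq.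
move: Hs' Hsub Hsp' Hu'; case: (take _ s) => [|x p] // Hs' Hsub Hsp' Hu'.
apply: nopath; exists x, p; split.
- by rewrite /is_path_on Hs' eqxx Hu'.
- by apply: contra HvW => /eqP <-; apply: Hsub; rewrite mem_head.
- by apply: contra HvW => /eqP <-; apply: Hsub; exact: mem_last.
Qed.

Definition concl u := exists c, [/\ uniq c, cycle e c, u \in c, {subset c <= W} &
  size c <= 2 * k /\ forall a b, a \in c -> b \in W -> e a b -> b \in c].

Lemma Lcore s u : uniq s -> sp s -> {subset s <= W} -> u \in s ->
  (forall s', uniq s' -> sp s' -> {subset s' <= W} -> u \in s' -> size s < size s' -> concl u) ->
  concl u.
Proof.
case: s => [|x0 p] // Hu Hsp HsW Hus ext.
have Hsz := noLong Hu Hsp HsW.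
case: (boolP [exists y, [&& y \in W, e x0 y & y \notin x0 :: p]]) =>
    [/existsP[y /and3P[Hy1 Hy2 Hy3]] | H1].
  apply: (ext (y :: x0 :: p)) => //.
  - by rewrite /= Hy3.
  - by rewrite /= esym Hy2.
  - by move=> a; rewrite inE => /orP[/eqP -> //|]; exact: HsW.
  - by rewrite inE Hus orbT.
case: (boolP [exists y, [&& y \in W, e (last x0 p) y & y \notin x0 :: p]]) =>
    [/existsP[y /and3P[Hy1 Hy2 Hy3]] | H2].
  apply: (ext (rcons (x0 :: p) y)) => //.
  - by rewrite rcons_uniq Hy3.
  - by rewrite /= rcons_path Hy2 andbT.
  - by move=> a; rewrite mem_rcons inE => /orP[/eqP -> //|]; exact: HsW.
  - by rewrite mem_rcons inE Hus orbT.
  - by rewrite size_rcons.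
set xl := last x0 p.
have HxlW : xl \in W by apply: HsW; exact: mem_last.
have Hx0W : x0 \in W by apply: HsW; exact: mem_head.
have C1 : k <= count (e x0) p.
  apply: leq_trans (Hdeg Hx0W) _; apply: count_lb => [w|w]; rewrite inE => /andP[Hw1 Hw2] //.
  move/existsPn: H1 => /(_ w); rewrite Hw1 Hw2 /= negbK inE => /orP[/eqP Ew|//].
  by move: Hw2; rewrite Ew eirr.
have C2 : k <= count (fun w => e w xl) (belast x0 p).
  apply: leq_trans (Hdeg HxlW) _; apply: count_lb => [w|w]; rewrite inE => /andP[Hw1 Hw2] //=;
    last by rewrite esym.
  move/existsPn: H2 => /(_ w); rewrite Hw1 Hw2 /= negbK lastI mem_rcons inE => /orP[/eqP Ew|//].
  by move: Hw2; rewrite Ew eirr.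
have Hlt : size p < k + k by move: Hsz => /= Hsz; lia.
have [p1 [y [r [Ep Hy Hl]]]] := @crossing x0 p (e x0) (fun w => e w xl)
  (leq_trans Hlt (leq_add C1 C2)).
set c := x0 :: p1 ++ rev (y :: r).
have Hperm : perm_eq c (x0 :: p).
  by rewrite /c Ep perm_cons perm_cat2l perm_rev.
have Hxl : xl = last y r by rewrite /xl Ep last_cat.
have Hpath1 : path e x0 p1 /\ path e y r.
  by move: Hsp; rewrite /= Ep cat_path => /andP[-> /= /andP[_ ->]].
have Hrevne : rev (y :: r) != [::] by rewrite rev_cons; case: (rev r).
have Hcyc : cycle e c.
  have -> : cycle e c = sp (rcons c x0) by [].
  rewrite /c rcons_cons -cats1 -catA cats1 -cat_cons.
  apply: sp_catL => //.
  - by case: Hpath1.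
  - rewrite -cats1; apply: sp_catL => //.
    + apply: sp_rev; by case: Hpath1.
    + by rewrite last_rev /= esym.
  - by case: (rev (y :: r)) Hrevne.
  - rewrite /=.
    have -> : head v (rcons (rev (y :: r)) x0) = head v (rev (y :: r)).
      by case: (rev (y :: r)) Hrevne.
    by rewrite head_rev /= -Hxl.
case: (boolP [exists a, exists b, [&& a \in c, b \in W, e a b & b \notin c]]) =>
    [/existsP[a /existsP[b /and4P[Ha Hb Hab Hbc]]] | H3].
  case/rot_to: Ha => i r' Hr.
  have Hmem : forall z, (z \in a :: r') = (z \in c) by move=> z; rewrite -Hr mem_rot.
  have Hcyc' : path e a (rcons r' a) by have := Hcyc; rewrite -(rot_cycle i) Hr.
  apply: (ext (b :: a :: r')).
  - by rewrite cons_uniq Hmem Hbc -Hr rot_uniq (perm_uniq Hperm).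
  - by rewrite /= esym Hab; move: Hcyc'; rewrite rcons_path => /andP[].
  - move=> z; rewrite inE => /orP[/eqP -> //|]; rewrite Hmem (perm_mem Hperm); exact: HsW.
  - by rewrite inE Hmem (perm_mem Hperm) Hus orbT.
  - have := f_equal size Hr; rewrite size_rot (perm_size Hperm) /= => ->; done.
exists c; split => //; last split.
- by rewrite (perm_uniq Hperm).
- by rewrite (perm_mem Hperm).
- by move=> z; rewrite (perm_mem Hperm); exact: HsW.
- by rewrite (perm_size Hperm).
- move=> a b Ha Hb Hab; move/existsPn: H3 => /(_ a) /existsPn /(_ b).
  by rewrite Ha Hb Hab /= negbK.
Qed.

Lemma Lcyc u : u \in W -> concl u.
Proof.
move=> HuW.
suff H : forall n s, #|W| - size s <= n -> uniq s -> sp s -> {subset s <= W} -> u \in s -> concl u.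
  apply: (H #|W| [:: u]) => //; first lia.
  - by move=> z; rewrite inE => /eqP ->.
  - by rewrite inE.
elim => [|n IH] s Hn Hu Hsp HsW Hus; apply: (Lcore Hu Hsp HsW Hus) => s' Hu' Hsp' HsW' Hus' Hlt.
- have : size s' <= #|W|.
    rewrite cardE; apply: uniq_leq_size => // z Hz; rewrite mem_enum; exact: HsW'.
  lia.
- apply: (IH s') => //.
  have : size s' <= #|W|.
    rewrite cardE; apply: uniq_leq_size => // z Hz; rewrite mem_enum; exact: HsW'.
  lia.
Qed.

End Comp.


Lemma sum_ind (A : {set T}) (P : pred T) :
  \sum_(u in A) (P u : nat) = #|[set u in A | P u]|.
Proof.
rewrite -sum1_card [RHS]big_mkcond [LHS]big_mkcond; apply: eq_bigr => u _.
by rewrite inE; case: (u \in A); case: (P u).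
Qed.

Definition N (S : {set T}) u := [set w in S | e u w].
Definition f (S : {set T}) := \sum_(u in S :\ v) #|N S u|.

Lemma f_del (S : {set T}) u : u \in S -> u != v ->
  f S + ((v \in S) && e u v) = f (S :\ u) + 2 * #|N S u|.
Proof.
move=> HuS Huv.
rewrite /f (big_setD1 u) ?inE ?Huv //=.
have E : (S :\ v) :\ u = (S :\ u) :\ v.
  by apply/setP => w; rewrite !inE; case: (w == u); case: (w == v).
rewrite E.
have Hw : forall w, w \in (S :\ u) :\ v -> #|N S w| = #|N (S :\ u) w| + e w u.
  move=> w Hw; rewrite (cardsD1 u (N S w)) addnC.
  have EE : N S w :\ u = N (S :\ u) w.
    by apply/setP => z; rewrite /N !inE andbA.
  by rewrite EE /N inE HuS.
rewrite (eq_bigr _ Hw) big_split /= sum_ind.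
have -> : [set w in (S :\ u) :\ v | e w u] = N S u :\ v.
  apply/setP => w; rewrite !inE esym.
  case: (boolP (w == u)) => [/eqP -> |]; first by rewrite eirr !andbF.
  by move=> _; case: (w == v); case: (w \in S).
have Hv : (v \in N S u) = ((v \in S) && e u v) by rewrite /N inE.
rewrite (cardsD1 v (N S u)) Hv; case: ((v \in S) && e u v) => /=; lia.
Qed.


Lemma f_rem (S D : {set T}) : D \subset S :\ v ->
  (forall a b, a \in D -> b \in S :\: D -> b != v -> ~~ e a b) ->
  f S = f (S :\: D) + \sum_(u in D) #|N S u|.
Proof.
move=> HD Hcl.
rewrite /f (big_setID D) /= addnC (setIidPr HD).
have -> : (S :\ v) :\: D = (S :\: D) :\ v.
  by apply/setP => w; rewrite !inE; case: (w \in D); case: (w == v).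
congr (_ + _); apply: eq_bigr => u; rewrite !inE => /and3P[Huv HuD HuS].
suff -> : N S u = N (S :\: D) u by []. apply/setP => w; rewrite /N !inE.
case: (boolP (w \in D)) => HwD //=.
case: (boolP (w \in S)) => HwS //=.
apply/negbTE; rewrite esym; apply: Hcl => //.
by rewrite !inE HuD HuS.
Qed.

Definition exc (S : {set T}) := v \in S /\ exists P : {set {set T}},
  [/\ partition P S,
      (forall B1 B2 x y, B1 \in P -> B2 \in P -> B1 != B2 -> x \in B1 -> y \in B2 -> ~~ e x y),
      (forall B, B \in P -> v \notin B -> #|B| = 2 * k /\ clique e B)
    & (forall B, B \in P -> v \in B -> [/\ #|B| = (2 * k).+1, clique e (B :\ v) & #|N S v| = 1])].

Lemma exc_block S : exc S -> forall u, u \in S -> exists B : {set T},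
  [/\ B \subset S, u \in B, (v \in B -> #|B| = (2 * k).+1 /\ clique e (B :\ v)),
     (v \notin B -> #|B| = 2 * k /\ clique e B) & (forall w, w \in S -> w \notin B -> ~~ e u w)].
Proof.
case=> HvS [P [HP Hcr Hnv Hv]] u HuS.
have HcP : cover P = S by case/and3P: HP => /eqP.
have HuC : u \in cover P by rewrite HcP.
exists (pblock P u); split.
- exact: partitionS HP (pblock_mem HuC).
- by rewrite mem_pblock.
- by move=> H; case: (Hv _ (pblock_mem HuC) H).
- exact: Hnv (pblock_mem HuC).
- move=> w HwS HwB.
  have HwC : w \in cover P by rewrite HcP.
  apply: (Hcr (pblock P u) (pblock P w)).
  + exact: pblock_mem.
  + exact: pblock_mem.
  + by apply: contraNneq HwB => ->; rewrite mem_pblock.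
  + by rewrite mem_pblock.
  + by rewrite mem_pblock.
Qed.

Lemma exc_v S : exc S -> #|N S v| = 1.
Proof.
case=> HvS [P [HP Hcr Hnv Hv]].
have HcP : cover P = S by case/and3P: HP => /eqP.
have HvC : v \in cover P by rewrite HcP.
by case: (Hv _ (pblock_mem HvC)); rewrite ?mem_pblock.
Qed.

Lemma exc_K S y : exc S -> y \in S -> y != v -> exists K : {set T},
  [/\ clique e K, #|K| = 2 * k, v \notin K, y \in K & K \subset S].
Proof.
move=> Hx HyS Hyv; have [B [HBS HyB Hv Hnv _]] := exc_block Hx HyS.
case: (boolP (v \in B)) => HvB.
- have [Hc Hcl] := Hv HvB.
  exists (B :\ v); split => //.
  + by move: Hc; rewrite (cardsD1 v B) HvB; lia.
  + by rewrite !inE eqxx.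
  + by rewrite !inE Hyv.
  + by apply: subset_trans HBS; apply: subsetDl.
- by have [Hc Hcl] := Hnv HvB; exists B.
Qed.

Lemma exc_f S : exc S -> f S <= (2 * k - 1) * #|S :\ v| + 1.
Proof.
move=> Hx.
have Hper : forall u, u \in S :\ v -> #|N S u| <= (2 * k - 1) + e u v.
  move=> u; rewrite !inE => /andP[Huv HuS].
  have [B [HBS HuB Hv Hnv Hcr]] := exc_block Hx HuS.
  have Hsub : N S u :\ v \subset (B :\ u) :\ v.
    apply/subsetP => w; rewrite /N !inE => /and3P[-> HwS Huw] /=.
    case: (boolP (w == u)) => [/eqP Ewu|_]; first by move: Huw; rewrite Ewu eirr.
    by apply: contraLR Huw => /= HwB; apply: Hcr.
  have H1 := subset_leq_card Hsub.
  have H2 : #|(B :\ u) :\ v| <= 2 * k - 1.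
    case: (boolP (v \in B)) => HvB.
    - have [Hc _] := Hv HvB.
      have H3 : #|B| = 1 + #|B :\ u| by rewrite (cardsD1 u B) HuB.
      have H4 : #|B :\ u| = 1 + #|(B :\ u) :\ v|.
        by rewrite (cardsD1 v (B :\ u)) !inE eq_sym Huv HvB.
      lia.
    - have [Hc _] := Hnv HvB.
      have H3 : #|B| = 1 + #|B :\ u| by rewrite (cardsD1 u B) HuB.
      have := subset_leq_card (subsetDl (B :\ u) [set v]); lia.
  have H5 : #|N S u| = (v \in N S u) + #|N S u :\ v| by rewrite (cardsD1 v (N S u)).
  have H6 : (v \in N S u) <= e u v by rewrite /N inE; case: (v \in S); case: (e u v).
  lia.
rewrite /f. have HH := @leq_sum _ (index_enum T) (fun u => u \in S :\ v) _ _ Hper.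
apply: (leq_trans HH); rewrite big_split /= sum_nat_const sum_ind.
have -> : [set u in S :\ v | e u v] = N S v.
  apply/setP => w; rewrite /N !inE esym.
  by case: (boolP (w == v)) => [/eqP ->|]; rewrite ?eirr ?andbF.
by rewrite (exc_v Hx) mulnC.
Qed.


Lemma exc_add S D : exc (S :\: D) -> D \subset S -> v \notin D -> clique e D ->
  #|D| = 2 * k -> (forall a b, a \in D -> b \in S :\: D -> ~~ e a b) -> exc S.
Proof.
case=> HvSD [P [HP Hcr Hnv Hv]] HDS HvD HcD HcardD Hsep.
have HvS : v \in S by move: HvSD; rewrite inE => /andP[].
have HNv : N S v = N (S :\: D) v.
  apply/setP => w; rewrite /N !inE.
  case: (boolP (w \in D)) => HwD //=.
  by case: (boolP (e v w)) => Hvw; rewrite ?andbF ?andbT //= esym in Hvw *;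
    have := Hsep w v HwD HvSD; rewrite Hvw.
split => //; exists (D |: P); split.
- have HD0 : D != set0 by rewrite -card_gt0 HcardD; lia.
  have Hdis : [disjoint D & S :\: D].
    by rewrite disjoint_subset; apply/subsetP => z Hz; rewrite !inE Hz.
  have := partitionU1 HP HD0 Hdis.
  have -> : D :|: (S :\: D) = S.
    apply/setP => z; rewrite !inE; case: (boolP (z \in D)) => Hz //=.
    by rewrite (subsetP HDS).
  done.
- move=> B1 B2 x y; rewrite !in_setU1 => /orP[/eqP->|H1] /orP[/eqP->|H2] Hne Hx Hy.
  + by rewrite eqxx in Hne.
  + by apply: Hsep => //; apply: (subsetP (partitionS HP H2)).
  + by rewrite esym; apply: Hsep => //; apply: (subsetP (partitionS HP H1)).
  + exact: (Hcr B1 B2).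
- move=> B; rewrite in_setU1 => /orP[/eqP->|H1] HvB; first by split.
  exact: Hnv.
- move=> B; rewrite in_setU1 => /orP[/eqP->|H1] HvB; first by rewrite HvB in HvD.
  by rewrite HNv; apply: Hv.
Qed.

Definition nc (D : {set T}) u : nat := [exists b in D, (b != u) && ~~ e u b].

Lemma sD (S D : {set T}) : D \subset S :\ v ->
  (forall a b, a \in D -> b \in S :\: D -> b != v -> ~~ e a b) ->
  \sum_(u in D) #|N S u| + \sum_(u in D) nc D u <=
    #|D| * (#|D| - 1) + #|[set u in D | (v \in S) && e u v]|.
Proof.
move=> HD Hcl.
have Hper : forall u, u \in D -> #|N S u| + nc D u <= (#|D| - 1) + ((v \in S) && e u v).
  move=> u HuD.
  have H5 : #|N S u| = (v \in N S u) + #|N S u :\ v| by rewrite (cardsD1 v (N S u)).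
  have H6 : (v \in N S u) = ((v \in S) && e u v) by rewrite /N inE.
  have Hsub : N S u :\ v \subset D :\ u.
    apply/subsetP => w; rewrite /N !inE => /and3P[Hwv HwS Huw].
    case: (boolP (w == u)) => [/eqP Ewu|_]; first by move: Huw; rewrite Ewu eirr.
    case: (boolP (w \in D)) => // HwD.
    by have := Hcl u w HuD; rewrite !inE HwD HwS Hwv Huw => /(_ isT isT).
  have H7 : #|D| = 1 + #|D :\ u| by rewrite (cardsD1 u D) HuD.
  rewrite /nc; case: (boolP [exists b in D, (b != u) && ~~ e u b]) => /= [/existsP[b /and3P[HbD Hbu Hub]]|_].
  - have Hsub2 : N S u :\ v \subset (D :\ u) :\ b.
      apply/subsetP => w Hw; have := subsetP Hsub w Hw; rewrite !inE => /andP[Hwu HwD].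
      rewrite Hwu HwD !andbT.
      apply: contraNneq Hub => Ewb; move: Hw; rewrite /N !inE -Ewb => /and3P[].
      by move=> _ _ ->.
    have H8 : #|D :\ u| = 1 + #|(D :\ u) :\ b| by rewrite (cardsD1 b (D :\ u)) !inE Hbu HbD.
    have := subset_leq_card Hsub2; rewrite H6 in H5; lia.
  - have := subset_leq_card Hsub; rewrite H6 in H5; lia.
rewrite -big_split /=.
have HH := @leq_sum _ (index_enum T) (fun u => u \in D) _ _ Hper.
apply: (leq_trans HH); rewrite big_split /= sum_nat_const sum_ind mulnC.
done.
Qed.

Lemma nc_pos (D : {set T}) : [exists x in D, exists y in D, (x != y) && ~~ e x y] ->
  1 <= \sum_(u in D) nc D u.
Proof.
case/existsP => x /andP[HxD /existsP[y /and3P[HyD Hxy Hexy]]].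
rewrite (big_setD1 x HxD) /nc.
have -> : [exists b in D, (b != x) && ~~ e x b].
  by apply/existsP; exists y; rewrite HyD eq_sym Hxy.
by [].
Qed.


Definition bnd (S : {set T}) := f S <= (2 * k - 1) * #|S :\ v|.

Lemma Rem (S : {set T}) (c : seq T) x0 :
  (forall S' : {set T}, #|S'| < #|S| -> bnd S' \/ exc S') ->
  uniq c -> cycle e c -> x0 \in c -> {subset c <= S :\ v} -> size c <= 2 * k ->
  (forall a b, a \in c -> b \in S :\ v -> e a b -> b \in c) ->
  bnd S \/ exc S \/
  [/\ v \in S, size c = 2 * k, clique e [set z in c] & exists2 x, x \in c & e x v].
Proof.
move=> IH Hu Hc Hx0 HcW Hsz Hcl.
set D := [set z in c].
have HDc : #|D| = size c by rewrite cardsE; apply/card_uniqP.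
have HvD : v \notin c by apply/negP => /HcW; rewrite !inE eqxx.
have HDsub : D \subset S :\ v by apply/subsetP => z; rewrite inE; exact: HcW.
have Hcl' : forall a b, a \in D -> b \in S :\: D -> b != v -> ~~ e a b.
  move=> a b; rewrite !inE => Ha /andP[HbD HbS] Hbv; apply/negP => Hab.
  by move: HbD; rewrite (Hcl a b Ha) // !inE Hbv HbS.
have Hfr := f_rem HDsub Hcl'.
set m := #|[set u in D | (v \in S) && e u v]|.
have HsDb : \sum_(u in D) #|N S u| + \sum_(u in D) nc D u <= #|D| * (#|D| - 1) + m
  := sD HDsub Hcl'.
have Hcard : #|S :\ v| = #|(S :\: D) :\ v| + #|D|.
  rewrite -(cardsID D (S :\ v)) (setIidPr HDsub) addnC.
  have -> : (S :\ v) :\: D = (S :\: D) :\ v.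
    by apply/setP => z; rewrite !inE; case: (z \in c); case: (z == v).
  done.
have Hx0D : x0 \in D by rewrite inE.
have HD1 : 0 < #|D| by apply/card_gt0P; exists x0.
have Hlt : #|S :\: D| < #|S|.
  rewrite -(cardsID D S).
  have : 0 < #|S :&: D|.
    apply/card_gt0P; exists x0; rewrite !inE Hx0 andbT.
    by have := HcW x0 Hx0; rewrite !inE => /andP[].
  lia.
have Hm : m <= #|D| by apply: subset_leq_card; apply/subsetP => z; rewrite inE => /andP[].
have Hm1 : size c = 2 * k -> m <= 1.
  move=> Hs2; rewrite leqNgt; apply/negP => /card_gt1P [a [b [Ha Hb Hab]]].
  rewrite !inE in Ha Hb; case/and3P: Ha => Ha _ Hav; case/and3P: Hb => Hb _ Hbv.
  by apply: (@CycD2 c a b) => //; rewrite esym.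
have Hnc := @nc_pos D.
case: (IH _ Hlt) => [Hb | Hx].
- rewrite /bnd in Hb.
  case: (ltnP #|D| (2 * k)) => HD.
  + left; rewrite /bnd Hfr Hcard.
    have := @arith1 #|D| (2 * k) HD.
    rewrite mulnDr; lia.
  + have HD2 : #|D| = 2 * k by lia.
    have Hsc : size c = 2 * k by lia.
    have Hm1' := Hm1 Hsc.
    case: (boolP [exists x in D, exists y in D, (x != y) && ~~ e x y]) => Hne.
    * left; rewrite /bnd Hfr Hcard; have := Hnc Hne; rewrite HD2 in HsDb *.
      have E : (2 * k - 1) * (2 * k) = 2 * k * (2 * k - 1) by rewrite mulnC.
      rewrite mulnDr; lia.
    * case: (posnP m) => Hm0.
        left; rewrite /bnd Hfr Hcard; rewrite HD2 Hm0 in HsDb *.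
        have E : (2 * k - 1) * (2 * k) = 2 * k * (2 * k - 1) by rewrite mulnC.
        rewrite mulnDr; lia.
      right; right.
      case/card_gt0P: Hm0 => x; rewrite !inE => /and3P[Hx HvS Hxv].
      split.
      - done.
      - done.
      - move=> a b Ha Hb' Hab; apply/negPn; apply: contra Hne => Hn; apply/existsP; exists a.
        by rewrite Ha; apply/existsP; exists b; rewrite Hb' Hab Hn.
      - by exists x.
- have Hfx := exc_f Hx; have [HvSD _] := Hx; have Hv1 := exc_v Hx.
  have Hm0 : m = 0.
    apply/eqP; rewrite cards_eq0; apply/eqP/setP => y; rewrite inE [in RHS]inE.
    apply/negbTE/negP => /andP[HyD /andP[HvS Hyv]].
    have : 0 < #|N (S :\: D) v| by rewrite Hv1.
    case/card_gt0P => w; rewrite /N inE => /andP[HwS Hvw].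
    have Hwv : w != v by apply: contraTneq Hvw => ->; rewrite eirr.
    have [K [HK HKc HvK HwK HKS]] := exc_K Hx HwS Hwv.
    have HyW : y \in S :\ v by apply: (subsetP HDsub).
    apply: (PK HK HKc HvK HwK (t := [:: v; y])) => //.
    + rewrite /= inE andbT; apply: contraTneq HyW => <-; by rewrite !inE eqxx.
    + move=> z; rewrite !inE => /orP[/eqP -> //|/eqP ->].
      by apply/negP => /(subsetP HKS); rewrite inE HyD.
    + by rewrite /= esym Hvw /= esym Hyv.
    + by move: HyW; rewrite /= !inE eq_sym => /andP[].
    + by rewrite /=; apply: leq_trans two_le.
  case: (ltnP #|D| (2 * k)) => HD.
  + left; rewrite /bnd Hfr Hcard; rewrite Hm0 in HsDb.
    have := @arith2 #|D| (2 * k) HD1 HD.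
    rewrite mulnDr; lia.
  + have HD2 : #|D| = 2 * k by lia.
    case: (boolP [exists x in D, exists y in D, (x != y) && ~~ e x y]) => Hne.
    * left; rewrite /bnd Hfr Hcard; have := Hnc Hne; rewrite HD2 Hm0 in HsDb *.
      have E : (2 * k - 1) * (2 * k) = 2 * k * (2 * k - 1) by rewrite mulnC.
      rewrite mulnDr; lia.
    * right; left; apply: (exc_add Hx) => //.
      - by apply: subset_trans HDsub (subsetDl _ _).
      - by rewrite inE.
      - move=> a b Ha Hb Hab; apply/negPn; apply: contra Hne => Hn; apply/existsP; exists a.
        by rewrite Ha; apply/existsP; exists b; rewrite Hb Hab Hn.
      - move=> a b Ha Hb.
        case: (boolP (b == v)) => [/eqP Ebv|Hbv]; last exact: Hcl'.
        subst b; apply/negP => Hav.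
        have Hin : a \in [set u in D | (v \in S) && e u v].
          rewrite inE Ha Hav andbT /=; move: Hb; rewrite inE => /andP[] //.
        have : 0 < m by apply/card_gt0P; exists a.
        by rewrite Hm0.
Qed.


Lemma closed_path (W D : {set T}) x p :
  (forall a b, a \in D -> b \in W -> e a b -> b \in D) ->
  x \in D -> path e x p -> {subset p <= W} -> {subset p <= D}.
Proof.
move=> Hcl; elim: p x => [|y p IH] x //= HxD /andP[Hxy Hp] HpW z.
have HyD : y \in D by apply: (Hcl x y) => //; apply: HpW; rewrite inE eqxx.
rewrite inE => /orP[/eqP -> //|Hz].
apply: (IH y) => // w Hw; apply: HpW; by rewrite inE Hw orbT.
Qed.

Lemma step (S : {set T}) :
  (forall S' : {set T}, #|S'| < #|S| -> bnd S' \/ exc S') -> bnd S \/ exc S.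
Proof.
move=> IH.
set W := S :\ v.
have HvW : v \notin W by rewrite !inE eqxx.
case: (boolP [exists u in W, 2 * #|N S u| <= (2 * k - 1) + ((v \in S) && e u v)]) =>
  [/existsP [u /andP[HuW Hu]] | HB].
- have HuS : u \in S by move: HuW; rewrite !inE => /andP[].
  have Huv : u != v by move: HuW; rewrite !inE => /andP[].
  have Hdel := f_del HuS Huv.
  have Hlt : #|S :\ u| < #|S| by rewrite (cardsD1 u S) HuS.
  have Hc : #|S :\ v| = #|(S :\ u) :\ v| + 1.
    rewrite (cardsD1 u (S :\ v)) HuW addnC.
    have -> : (S :\ v) :\ u = (S :\ u) :\ v.
      by apply/setP => w; rewrite !inE; case: (w == u); case: (w == v).
    done.
  have Ha : ((v \in S) && e u v : nat) <= 1 by case: ((v \in S) && e u v).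
  case: (IH _ Hlt) => [Hb | Hx].
  + left; rewrite /bnd Hc mulnDr muln1; rewrite /bnd in Hb; lia.
  + have Hfx := exc_f Hx.
    case: (leqP (2 * #|N S u|) (2 * k - 2 + ((v \in S) && e u v))) => H.
    * left; rewrite /bnd Hc mulnDr muln1; lia.
    * exfalso.
      have Hd : #|N S u| = (v \in N S u) + #|N S u :\ v| by rewrite (cardsD1 v (N S u)).
      have : 0 < #|N S u :\ v| by move: Hd; case: (v \in N S u) => /=; lia.
      case/card_gt0P => y; rewrite /N !inE => /and3P[Hyv HyS Huy].
      have Hyu : y != u by apply: contraTneq Huy => ->; rewrite eirr.
      have HyS' : y \in S :\ u by rewrite !inE Hyu.
      have [K [HK HKc HvK HyK HKS]] := exc_K Hx HyS' Hyv.
      apply: (PK HK HKc HvK HyK (t := [:: u])) => //.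
      -- move=> z; rewrite inE => /eqP ->.
         by apply/negP => /(subsetP HKS); rewrite !inE eqxx.
      -- by rewrite /= esym Huy.
      -- by rewrite /=; apply: leq_trans two_le.
- have Hdeg : forall u, u \in W -> k <= #|[set w in W | e u w]|.
    move=> u HuW.
    have HuS : u \in S by move: HuW; rewrite !inE => /andP[].
    have Hd : #|N S u| = (v \in N S u) + #|N S u :\ v| by rewrite (cardsD1 v (N S u)).
    have E : N S u :\ v = [set w in W | e u w].
      by apply/setP => w; rewrite /N !inE andbA.
    have Hv : (v \in N S u) = ((v \in S) && e u v) by rewrite /N inE.
    move/existsPn: HB => /(_ u); rewrite HuW /= -ltnNge.
    rewrite Hd E Hv; case: ((v \in S) && e u v) => /=; lia.
  case: (set_0Vmem W) => [HW0 | [u0 Hu0]].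
    by left; rewrite /bnd /f -/W HW0 big_set0.
  have [c [Hu Hc Hu0c HcW [Hsz Hcl]]] := Lcyc HvW Hdeg Hu0.
  case: (Rem IH Hu Hc Hu0c HcW Hsz Hcl) => [|[|]]; [by left | by right |].
  case=> HvS Hsc Hcliq [x Hxc Hxv].
  have HvC : v \notin c by apply/negP => /HcW; rewrite (negbTE HvW).
  case: (boolP (W \subset [set z in c])) => HWD.
  + right; split => //; exists [set S]; split.
    * rewrite /partition cover1 trivIset1 eqxx /= in_set1.
      by apply/negP => /eqP E; move: HvS; rewrite -E inE.
    * by move=> B1 B2 x1 y1; rewrite !in_set1 => /eqP -> /eqP ->; rewrite eqxx.
    * by move=> B; rewrite in_set1 => /eqP ->; rewrite HvS.
    * move=> B; rewrite in_set1 => /eqP -> _.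
      have EW : S :\ v = [set z in c].
        apply/eqP; rewrite eqEsubset HWD; apply/subsetP => z; rewrite inE; exact: HcW.
      split.
      -- rewrite (cardsD1 v S) HvS EW cardsE (card_uniqP Hu) Hsc; lia.
      -- by rewrite EW.
      -- have -> : N S v = [set x].
           apply/setP => w; rewrite /N !inE.
           case: (boolP (w == x)) => [/eqP -> | Hwx].
             by rewrite esym Hxv andbT; have := HcW x Hxc; rewrite !inE => /andP[].
           apply/negP => /andP[HwS Hvw].
           have Hwv : w != v by apply: contraTneq Hvw => ->; rewrite eirr.
           have Hwc : w \in c.
             by have := subsetP HWD w; rewrite inE; apply; rewrite !inE Hwv.
           by apply: (@CycD2 c x w) => //; rewrite eq_sym.
         by rewrite cards1.
  + case/subsetPn: HWD => u1 Hu1W Hu1D.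
    have [c' [Hu' Hc' Hu1c HcW' [Hsz' Hcl']]] := Lcyc HvW Hdeg Hu1W.
    have HxC' : x \notin c'.
      apply/negP => Hx'; case/rot_to: Hx' => i r Hr.
      have Hp : path e x (rcons r x) by have := Hc'; rewrite -(rot_cycle i) Hr.
      have HrW : {subset r <= W}.
        by move=> z Hz; apply: HcW'; rewrite -(mem_rot i) Hr inE Hz orbT.
      have Hsub := @closed_path W [set z in c] x r
        ltac:(move=> a b Ha Hb Hab; rewrite inE; apply: (Hcl a b) => //; by rewrite inE in Ha)
        ltac:(by rewrite inE)
        ltac:(by move: Hp; rewrite rcons_path => /andP[]) HrW.
      move: Hu1c; rewrite -(mem_rot i) Hr inE => /orP[/eqP Eu|Hr1].
        by move: Hu1D; rewrite Eu inE Hxc.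
      by move: (Hsub u1 Hr1); rewrite (negbTE Hu1D).
    have Hnov : forall z, z \in c' -> ~~ e z v.
      move=> z Hz; apply/negP => Hzv.
      have HzW := HcW' z Hz.
      case: (boolP (z \in c)) => Hzc.
      - apply: (@CycD2 c x z) => //; last by rewrite esym.
        by apply: contraNneq HxC' => ->.
      - apply: (@CycD1 c x z) => //; last by rewrite esym.
        by apply: contraNneq HvW => <-.
    case: (Rem IH Hu' Hc' Hu1c HcW' Hsz' Hcl') => [|[|]]; [by left | by right |].
    case=> _ _ _ [x' Hx' Hx'v].
    by move: (Hnov x' Hx'); rewrite Hx'v.
Qed.

Lemma mainP (S : {set T}) : bnd S \/ exc S.
Proof.
have H : forall n (S : {set T}), #|S| <= n -> bnd S \/ exc S.
  elim => [|n IHn] S' HS; apply: step => S'' HS''; first lia.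
  by apply: IHn; lia.
exact: (H #|S|).
Qed.

End Main.

Lemma sum_indG (I : finType) (A : {set I}) (P : pred I) :
  \sum_(u in A) (P u : nat) = #|[set u in A | P u]|.
Proof.
rewrite -sum1_card [RHS]big_mkcond [LHS]big_mkcond; apply: eq_bigr => u _.
by rewrite inE; case: (u \in A); case: (P u).
Qed.

Lemma handshake (T : finType) (e : rel T) : symmetric e -> irreflexive e ->
  2 * num_edges e = \sum_u deg e u.
Proof.
move=> esym eirr.
set E := [set A : {set T} | [exists x, exists y, e x y && (A == [set x; y])]].
have -> : num_edges e = #|E| by [].
have Hdeg : forall u, deg e u = \sum_(A in E) (u \in A : nat).
  move=> u; rewrite sum_indG /deg.
  have -> : [set A in E | u \in A] = (fun w => [set u; w]) @: [set w | e u w].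
    apply/setP => A; rewrite inE; apply/andP/imsetP.
    - case=> HA; move: (HA); rewrite inE => /existsP[x /existsP[y /andP[Hxy /eqP EA]]].
      rewrite EA !inE => /orP[/eqP Eu|/eqP Eu].
      + by exists y; [rewrite inE Eu | rewrite Eu].
      + by exists x; [rewrite inE Eu esym | rewrite Eu setUC].
    - case=> w; rewrite inE => Huw ->; split; last by rewrite !inE eqxx.
      by rewrite inE; apply/existsP; exists u; apply/existsP; exists w; rewrite Huw eqxx.
  rewrite card_in_imset // => w1 w2; rewrite !inE => H1 H2 Eq.
  have : w1 \in [set u; w2] by rewrite -Eq !inE eqxx orbT.
  rewrite !inE => /orP[/eqP E1|/eqP //].
  by move: H1; rewrite E1 eirr.
rewrite (eq_bigr _ (fun u _ => Hdeg u)) exchange_big /=.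
rewrite (eq_bigr (fun _ => 2)); first by rewrite sum_nat_const mulnC.
move=> A; rewrite inE => /existsP[x /existsP[y /andP[Hxy /eqP EA]]].
have -> : \sum_u (u \in A : nat) = #|A|.
  rewrite -sum1_card [RHS]big_mkcond; apply: eq_bigr => u _; by case: (u \in A).
rewrite EA cards2.
by case: (boolP (x == y)) => [/eqP Exy|//]; move: Hxy; rewrite Exy eirr.
Qed.

Theorem lemma2 (k : nat) (T : finType) (e : rel T) (v : T) :
  2 <= k ->
  simple_graph e ->
  ~ has_path_avoiding_ends e (2 * k).+1 v ->
  (2 * num_edges e - deg e v <= (2 * k - 1) * (#|T| - 1))%N
  \/ exceptional_graph e k v.
Proof.
move=> hk [esym eirr] np.
case: (mainP hk esym eirr np [set: T]) => [Hb | [HvS [P [HP Hcr Hnv Hv]]]].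
- left.
  have Hf : 2 * num_edges e - deg e v = f e v [set: T].
    rewrite handshake // (bigD1 v) //= addKn /f.
    apply: eq_big => [u|u _]; first by rewrite !inE andbT.
    by rewrite /deg; apply: eq_card => w; rewrite /N !inE.
  have Hc : #|T| - 1 = #|[set: T] :\ v|.
    by rewrite -cardsT (cardsD1 v [set: T]) inE add1n subn1.
  by rewrite Hf Hc.
- right; exists P; split => //.
  move=> B HB HvB; have [H1 H2 H3] := Hv B HB HvB; split => //.
  rewrite -H3; apply: eq_card => w; by rewrite /N !inE.
Qed.
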